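(* Let $g$ be an odd positive integer and $j$ an integer with $0\leqslant j\leqslant (g-1)/2$. Then $\beta_-^{\,j+(g-1)/2}\beta_+^{\,g-1}\zeta_{g-2j-1}$ is congruent modulo $J_g$ to $c\,\gamma^{g-1}$ for some positive rational number $c$.
   Context: In $\mathbb{C}[\alpha,\beta,\gamma]$: $\zeta_i=0$ for $i<0$, $\zeta_0=1$, $\zeta_{k+1}=\alpha\zeta_k+k^2(\beta+(-1)^k8)\zeta_{k-1}+2k(k-1)\gamma\zeta_{k-2}$ for $k\geqslant0$; $J_k=(\zeta_k,\zeta_{k+1},\zeta_{k+2})$; $\beta_\pm=\beta\pm8$. *)

(* Defs.v *)
From HB Require Import structures.
From mathcomp Require Import all_boot all_order all_algebra all_field.
From mathcomp Require Import mpoly.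
Set Implicit Arguments. Unset Strict Implicit. Unset Printing Implicit Defensive.
Import Order.TTheory GRing.Theory Num.Theory.
Local Open Scope ring_scope.

Definition P := {mpoly algC[3]}.

Definition alpha : P := 'X_(0 : 'I_3).
Definition beta  : P := 'X_(1 : 'I_3).
Definition gamma : P := 'X_(2 : 'I_3).

Definition beta_plus  : P := beta + 8%:R.
Definition beta_minus : P := beta - 8%:R.

(* zs n = zeta_{n-2}; so zs 0 = zeta_{-2} = 0, zs 1 = zeta_{-1} = 0,
   zs 2 = zeta_0 = 1, and for k >= 0, zs (k+3) = zeta_{k+1} given by
   zeta_{k+1} = alpha zeta_k + k^2 (beta + (-1)^k 8) zeta_{k-1}
                + 2 k (k-1) gamma zeta_{k-2}. *)
Fixpoint zs (n : nat) : P :=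
  match n with
  | 0 => 0
  | 1 => 0
  | 2 => 1
  | S ((S ((S k) as k1)) as k2) =>
      alpha * zs k2
      + (k%:R ^+ 2) * (beta + (-1) ^+ k * 8%:R) * zs k1
      + 2%:R * k%:R * (k%:R - 1) * gamma * zs k
  end.

Definition zeta (k : nat) : P := zs k.+2.

Definition congr_mod_J (k : nat) (p q : P) : Prop :=
  exists a b d : P, p - q = a * zeta k + b * zeta k.+1 + d * zeta k.+2.

(* Main.v *)
Require Import Defs.
From HB Require Import structures.
From mathcomp Require Import all_boot all_order all_algebra all_field.
From mathcomp Require Import mpoly.
From mathcomp Require Import ring lra zify.
Import Order.TTheory GRing.Theory Num.Theory.
Local Open Scope ring_scope.

Definition K (q : rat) : P := (ratr q : algC)%:MP.
Lemma KD a b : K (a + b) = K a + K b. Proof. rewrite /K [ratr (a + b)]rmorphD; apply: mpolyCD. Qed.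
Lemma KM a b : K (a * b) = K a * K b. Proof. rewrite /K [ratr (a * b)]rmorphM; apply: mpolyCM. Qed.
Lemma KN a : K (- a) = - K a. Proof. rewrite /K [ratr (- a)]rmorphN; apply: mpolyCN. Qed.
Lemma Kn n : K n%:R = n%:R. Proof. by rewrite /K ratr_nat mpolyC_nat. Qed.
Lemma K0 : K 0 = 0. Proof. by rewrite /K rmorph0 mpolyC0. Qed.
Lemma K1 : K 1 = 1. Proof. by rewrite /K rmorph1 mpolyC1. Qed.
Lemma KX a m : K (a ^+ m) = K a ^+ m. Proof. rewrite /K [ratr (a ^+ m)]rmorphXn /=. elim: m => [|m IH]; first by rewrite !expr0 mpolyC1. by rewrite !exprS mpolyCM IH. Qed.

Definition inJ (g : nat) (x : P) : Prop :=
  exists a b d : P, x = a * zeta g + b * zeta g.+1 + d * zeta g.+2.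

Lemma inJ0 g : inJ g 0. Proof. by exists 0, 0, 0; rewrite !mul0r !addr0. Qed.
Lemma inJD g x y : inJ g x -> inJ g y -> inJ g (x + y).
Proof. move=> [a [b [d ->]]] [a' [b' [d' ->]]]; exists (a + a'), (b + b'), (d + d'); ring. Qed.
Lemma inJN g x : inJ g x -> inJ g (- x).
Proof. move=> [a [b [d ->]]]; exists (- a), (- b), (- d); ring. Qed.
Lemma inJB g x y : inJ g x -> inJ g y -> inJ g (x - y).
Proof. by move=> hx hy; apply: inJD => //; apply: inJN. Qed.
Lemma inJM g c x : inJ g x -> inJ g (c * x).
Proof. move=> [a [b [d ->]]]; exists (c * a), (c * b), (c * d); ring. Qed.

Lemma zsS k : zs k.+3 = alpha * zs k.+2 + (k%:R ^+ 2) * (beta + (-1) ^+ k * 8%:R) * zs k.+1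
      + 2%:R * k%:R * (k%:R - 1) * gamma * zs k.
Proof. by []. Qed.

Lemma zetaS k : zeta k.+2 = alpha * zeta k.+1
   + ((k.+1)%:R ^+ 2) * (beta + (-1) ^+ k.+1 * 8%:R) * zeta k
   + 2%:R * (k.+1)%:R * k%:R * gamma * zs k.+1.
Proof. rewrite /zeta (zsS k.+1). ring. Qed.

Lemma inJz g : forall d, inJ g (zeta (g + d)) /\ inJ g (zeta (g + d).+1) /\ inJ g (zeta (g + d).+2).
Proof.
elim=> [|d [h0 [h1 h2]]].
  rewrite addn0; split; [|split].
  - by exists 1, 0, 0; ring.
  - by exists 0, 1, 0; ring.
  - by exists 0, 0, 1; ring.
rewrite addnS; split=> //; split=> //.
rewrite (zetaS (g + d).+1).
apply: inJD; [apply: inJD|]; apply: inJM => //.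
Qed.

Lemma inJ_ge g m : (g <= m)%N -> inJ g (zeta m).
Proof. move/subnKC <-. by case: (inJz g (m - g)). Qed.

Lemma natr_neq0 (N : nat) : (0 < N)%N -> (N%:R : rat) != 0.
Proof. by rewrite pnatr_eq0 -lt0n. Qed.

Lemma inJ_scale g (N : nat) x y c : (0 < N)%N ->
  inJ g (N%:R * x - K (N%:R * c) * y) -> inJ g (x - K c * y).
Proof.
move=> hN h.
have e : K (N%:R^-1) * K N%:R = 1 by rewrite -KM mulVf ?natr_neq0 // K1.
rewrite Kn in e.
have -> : x - K c * y = K (N%:R^-1) * (N%:R * x - K (N%:R * c) * y).
  rewrite KM Kn.
  transitivity (K (N%:R^-1) * N%:R * (x - K c * y)); first by rewrite e mul1r.
  ring.
by apply: inJM.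
Qed.

Lemma inJ_scale0 g (N : nat) x : (0 < N)%N -> inJ g (N%:R * x) -> inJ g x.
Proof.
move=> hN h.
have := @inJ_scale g N x 0 0 hN.
by rewrite !mulr0 !subr0; apply.
Qed.

Lemma inJ_gamma g x : inJ g x -> inJ g.+1 (gamma * x).
Proof.
have hz : inJ g.+1 (gamma * zeta g).
  apply: (@inJ_scale0 _ (2 * g.+2 * g.+1)) => //.
  have -> : (2 * g.+2 * g.+1)%:R * (gamma * zeta g) = zeta g.+3 - alpha * zeta g.+2
     - ((g.+2)%:R ^+ 2 * (beta + (-1) ^+ g.+2 * 8%:R)) * zeta g.+1.
    rewrite (zetaS g.+1) /zeta. ring.
  apply: inJB; [apply: inJB; [apply: inJ_ge; lia | apply: inJM; apply: inJ_ge; lia] | apply: inJM; apply: inJ_ge; lia].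
move=> [a [b [d ->]]].
have -> : gamma * (a * zeta g + b * zeta g.+1 + d * zeta g.+2) =
   a * (gamma * zeta g) + (b * gamma) * zeta g.+1 + (d * gamma) * zeta g.+2 by ring.
apply: inJD; [apply: inJD|]; apply: inJM => //; apply: inJ_ge; lia.
Qed.

Lemma inJ_gammaX n x : inJ 1 x -> inJ n.+1 (gamma ^+ n * x).
Proof.
elim: n => [|n IH] h; first by rewrite expr0 mul1r.
rewrite exprS -mulrA; apply: inJ_gamma; exact: IH.
Qed.

Lemma inJ1_alpha : inJ 1 alpha.
Proof. exists 1, 0, 0. rewrite /zeta /=. ring. Qed.

Lemma inJ1_bm : inJ 1 beta_minus.
Proof. exists (- alpha), 1, 0. rewrite /beta_minus /zeta /=. ring. Qed.

Lemma topA n : inJ n.+1 (gamma ^+ n * alpha).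
Proof. exact: inJ_gammaX inJ1_alpha. Qed.
Lemma topB n : inJ n.+1 (gamma ^+ n * beta_minus).
Proof. exact: inJ_gammaX inJ1_bm. Qed.

Lemma topP n m : inJ n.+1 (beta_plus ^+ m * gamma ^+ n - 16%:R ^+ m * gamma ^+ n).
Proof.
elim: m => [|m IH]; first by rewrite !expr0 !mul1r subrr; exact: inJ0.
have -> : beta_plus ^+ m.+1 * gamma ^+ n - 16%:R ^+ m.+1 * gamma ^+ n =
  beta_plus * (beta_plus ^+ m * gamma ^+ n - 16%:R ^+ m * gamma ^+ n)
  + 16%:R ^+ m * (gamma ^+ n * beta_minus).
  rewrite !exprS /beta_minus /beta_plus. ring.
apply: inJD; apply: inJM => //; exact: topB.
Qed.

Definition delta : P := beta_minus * beta_plus.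
Definition XE (g i : nat) : P := delta ^+ (g - 1 - i) * zeta (2 * i).
Definition XO (g i : nat) : P := delta ^+ (g - 2 - i) * beta_plus * zeta (2 * i).+1.
Definition PE (g i : nat) : Prop :=
  exists c : rat, inJ g (XE g i - K c * gamma ^+ g.-1) /\ (odd g -> 0 < c).
Definition PO (g i : nat) : Prop :=
  exists c : rat, inJ g (XO g i - K c * gamma ^+ g.-1) /\ (~~ odd g -> c < 0).

Lemma sgnE n : (-1) ^+ n = (if odd n then -1 else 1) :> P.
Proof. by rewrite -signr_odd; case: (odd n). Qed.

Lemma odd2 i : odd (2 * i) = false.
Proof. by rewrite oddM. Qed.

Lemma stepO m i :
  (forall i, ((2 * i <= m)%N -> PE m.+1 i) /\ (((2 * i).+1 <= m)%N -> PO m.+1 i)) ->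
  ((2 * i.+1 <= m.+1)%N -> PE m.+2 i.+1) ->
  (((2 * i.+1).+1 <= m.+1)%N -> PO m.+2 i.+1) ->
  ((2 * i).+1 <= m.+1)%N -> PO m.+2 i.
Proof.
move=> IHm IHE IHO hi.
have eX : XO m.+2 i = delta ^+ (m - i) * beta_plus * zeta (2 * i).+1.
  by rewrite /XO; have -> : (m.+2 - 2 - i = m - i)%N by lia.
have Ha : inJ m.+2 (delta ^+ (m - i) * zeta (2 * i).+3).
  case: (leqP (2 * i).+3 m.+1) => h3.
    have [c2 [hc2 _]] := IHO (ltac:(lia)).
    have -> : delta ^+ (m - i) * zeta (2 * i).+3 =
       beta_minus * (XO m.+2 i.+1 - K c2 * gamma ^+ m.+1) + K c2 * (gamma ^+ m.+1 * beta_minus).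
      rewrite /XO.
      have -> : (m - i = (m.+2 - 2 - i.+1).+1)%N by lia.
      have -> : ((2 * i.+1).+1 = (2 * i).+3)%N by lia.
      rewrite exprS /delta. ring.
    by apply: inJD; apply: inJM => //; exact: topB.
  by apply: inJM; apply: inJ_ge; lia.
have Hb : inJ m.+2 (alpha * (delta ^+ (m - i) * zeta (2 * i).+2)).
  case: (leqP (2 * i).+2 m.+1) => h2.
    have [c3 [hc3 _]] := IHE (ltac:(lia)).
    have -> : alpha * (delta ^+ (m - i) * zeta (2 * i).+2) =
       alpha * (XE m.+2 i.+1 - K c3 * gamma ^+ m.+1) + K c3 * (gamma ^+ m.+1 * alpha).
      rewrite /XE.
      have -> : (m.+2 - 1 - i.+1 = m - i)%N by lia.
      have -> : (2 * i.+1 = (2 * i).+2)%N by lia.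
      ring.
    by apply: inJD; apply: inJM => //; exact: topA.
  by apply: inJM; apply: inJM; apply: inJ_ge; lia.
have [c1 [hc1 sc1]] := (IHm i).1 (ltac:(lia)).
have Hc := @inJ_gamma _ _ hc1.
pose c : rat := - (((2 * i).+1)%:R / (i.+1)%:R) * c1.
exists c; split; last first.
  move=> hodd; rewrite /c mulNr oppr_lt0; apply: mulr_gt0; last first.
    by apply: sc1; move: hodd => /=; rewrite negbK.
  by apply: divr_gt0; rewrite ltr0n.
apply: (@inJ_scale _ (((2 * i).+2) ^ 2)); first by rewrite expn_gt0.
have eNc : (((2 * i).+2) ^ 2)%:R * c = - ((2 * (2 * i).+2 * (2 * i).+1)%:R) * c1.
  have hi1 : ((i.+1)%:R : rat) != 0 by rewrite pnatr_eq0.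
  rewrite /c natrX; field.
  by rewrite nat1r.
rewrite eNc.
have -> : (((2 * i).+2) ^ 2)%:R * XO m.+2 i
     - K (- ((2 * (2 * i).+2 * (2 * i).+1)%:R) * c1) * gamma ^+ (m.+2).-1
   = delta ^+ (m - i) * zeta (2 * i).+3 - alpha * (delta ^+ (m - i) * zeta (2 * i).+2)
     - (2 * (2 * i).+2 * (2 * i).+1)%:R * (gamma * (XE m.+1 i - K c1 * gamma ^+ m)).
  rewrite KM KN Kn eX /XE.
  have -> : (m.+1 - 1 - i = m - i)%N by lia.
  have s1 : (-1) ^+ (2 * i).+2 = 1 :> P by rewrite sgnE /= odd2.
  have eg : gamma ^+ (m.+2).-1 = gamma * gamma ^+ m by rewrite exprS.
  rewrite eg (zetaS (2 * i).+1) s1.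
  change (zs (2 * i).+2) with (zeta (2 * i)).
  rewrite /beta_plus. move: (delta ^+ (m - i)) => D. ring.
apply: inJB; [apply: inJB => // | apply: inJM => //].
Qed.

Lemma stepE m i :
  (forall i, ((2 * i <= m)%N -> PE m.+1 i) /\ (((2 * i).+1 <= m)%N -> PO m.+1 i)) ->
  ((2 * i.+1 <= m.+1)%N -> PE m.+2 i.+1) ->
  (((2 * i).+1 <= m.+1)%N -> PO m.+2 i) ->
  (2 * i <= m.+1)%N -> PE m.+2 i.
Proof.
move=> IHm IHE HO hi.
have eX : XE m.+2 i = delta ^+ (m - i) * beta_plus * (beta_minus * zeta (2 * i)).
  rewrite /XE; have -> : (m.+2 - 1 - i = (m - i).+1)%N by lia.
  rewrite exprSr /delta; move: ((beta_minus * beta_plus) ^+ (m - i)) => D; ring.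
have [c2 [Ha [sa1 sa2]]] : exists c2 : rat,
   inJ m.+2 (delta ^+ (m - i) * beta_plus * zeta (2 * i).+2 - K c2 * gamma ^+ m.+1)
   /\ (odd m.+2 -> 0 <= c2) /\ (odd m.+2 -> i = 0%N -> 0 < c2).
  case: (leqP (2 * i).+2 m.+1) => h2.
    have [c3 [hc3 sc3]] := IHE (ltac:(lia)).
    exists (16%:R * c3); split; last first.
      split=> hodd; [apply/ltW | move=> _];
        (apply: mulr_gt0; [by rewrite ltr0n | exact: sc3]).
    have -> : delta ^+ (m - i) * beta_plus * zeta (2 * i).+2 - K (16%:R * c3) * gamma ^+ m.+1 =
       beta_plus * (XE m.+2 i.+1 - K c3 * gamma ^+ m.+1)
       + K c3 * (beta_plus ^+ 1 * gamma ^+ m.+1 - 16%:R ^+ 1 * gamma ^+ m.+1).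
      rewrite /XE KM Kn.
      have -> : (m.+2 - 1 - i.+1 = m - i)%N by lia.
      have -> : (2 * i.+1 = (2 * i).+2)%N by lia.
      move: (delta ^+ (m - i)) => D. ring.
    by apply: inJD; apply: inJM => //; exact: topP.
  exists 0; split; last first.
    split=> // hodd i0; exfalso; move: hodd h2; rewrite i0; case: m {IHm IHE HO hi eX} => //= m'; lia.
  rewrite K0 mul0r subr0; apply: inJM; apply: inJ_ge; lia.
have Hb : inJ m.+2 (alpha * (delta ^+ (m - i) * beta_plus * zeta (2 * i).+1)).
  case: (leqP (2 * i).+1 m.+1) => h1.
    have [c3 [hc3 _]] := HO h1.
    have -> : alpha * (delta ^+ (m - i) * beta_plus * zeta (2 * i).+1) =
       alpha * (XO m.+2 i - K c3 * gamma ^+ m.+1) + K c3 * (gamma ^+ m.+1 * alpha).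
      rewrite /XO.
      have -> : (m.+2 - 2 - i = m - i)%N by lia.
      move: (delta ^+ (m - i)) => D. ring.
    by apply: inJD; apply: inJM => //; exact: topA.
  by apply: inJM; apply: inJM; apply: inJ_ge; lia.
have [c1 [Hc [sc1 sc2]]] : exists c1 : rat,
   inJ m.+2 (gamma * (delta ^+ (m - i) * beta_plus * zs (2 * i).+1) - K c1 * gamma ^+ m.+1)
   /\ (odd m.+2 -> c1 <= 0) /\ (odd m.+2 -> (0 < i)%N -> c1 < 0).
  case: i hi {eX Ha Hb IHE HO sa2} => [|i'] hi.
    exists 0; split; last by split=> // _ .
    have -> : zs (2 * 0).+1 = 0 by [].
    rewrite K0 mul0r subr0 !mulr0; exact: inJ0.
  have [c3 [hc3 sc3]] := (IHm i').2 (ltac:(lia)).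
  exists c3; split; last first.
    split=> hodd; [|move=> _]; [apply/ltW|]; apply: sc3; by move: hodd => /=.
  have -> : gamma * (delta ^+ (m - i'.+1) * beta_plus * zs (2 * i'.+1).+1) - K c3 * gamma ^+ m.+1
     = gamma * (XO m.+1 i' - K c3 * gamma ^+ (m.+1).-1).
    rewrite /XO.
    have -> : (m.+1 - 2 - i' = m - i'.+1)%N by lia.
    have -> : ((2 * i'.+1).+1 = ((2 * i').+1).+2)%N by lia.
    change (zs ((2 * i').+1).+2) with (zeta (2 * i').+1).
    rewrite [gamma ^+ m.+1]exprS /=.
    move: (delta ^+ (m - i'.+1)) => D. ring.
  exact: inJ_gamma.
pose M := (2 * (2 * i).+1 * (2 * i))%N.
pose c : rat := (c2 - M%:R * c1) / (((2 * i).+1 ^ 2)%N)%:R.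
exists c; split; last first.
  move=> hodd; rewrite /c; apply: divr_gt0; last by rewrite ltr0n expn_gt0.
  rewrite subr_gt0.
  case: (posnP i) => [i0|ipos].
    by rewrite /M i0 /= mul0r; apply: sa2.
  apply: (lt_le_trans _ (sa1 hodd)).
  have hM : (0 < M)%N by rewrite /M; lia.
  rewrite pmulr_rlt0 ?ltr0n //; exact: sc2 hodd ipos.
apply: (@inJ_scale _ (((2 * i).+1) ^ 2)); first by rewrite expn_gt0.
have eNc : (((2 * i).+1) ^ 2)%:R * c = c2 - M%:R * c1.
  rewrite /c mulrC -mulrA mulVf ?mulr1 //; apply: natr_neq0; by rewrite expn_gt0.
rewrite eNc.
have -> : (((2 * i).+1) ^ 2)%:R * XE m.+2 i - K (c2 - M%:R * c1) * gamma ^+ (m.+2).-1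
   = (delta ^+ (m - i) * beta_plus * zeta (2 * i).+2 - K c2 * gamma ^+ m.+1)
     - alpha * (delta ^+ (m - i) * beta_plus * zeta (2 * i).+1)
     - M%:R * (gamma * (delta ^+ (m - i) * beta_plus * zs (2 * i).+1) - K c1 * gamma ^+ m.+1).
  rewrite KD KN KM Kn eX.
  have s1 : (-1) ^+ (2 * i).+1 = -1 :> P by rewrite sgnE /= odd2.
  rewrite (zetaS (2 * i)) s1 /M.
  rewrite /beta_minus. move: (delta ^+ (m - i)) => D. rewrite /=. ring.
apply: inJB; [apply: inJB => // | apply: inJM => //].
Qed.

Lemma main m : forall i, ((2 * i <= m)%N -> PE m.+1 i) /\ (((2 * i).+1 <= m)%N -> PO m.+1 i).
Proof.
elim: m => [|m IHm] i.
  split=> hi; last by exfalso; lia.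
  have -> : i = 0%N by lia.
  exists 1; split=> // .
  rewrite /XE K1 /= expr0 !mul1r /zeta /= subrr; exact: inJ0.
suff H : forall d i, (m.+2 <= 2 * i + d)%N ->
    ((2 * i <= m.+1)%N -> PE m.+2 i) /\ (((2 * i).+1 <= m.+1)%N -> PO m.+2 i).
  apply: (H m.+2); lia.
elim=> [|d IHd] j hjd.
  by split=> h; exfalso; lia.
have [IHE IHO] := IHd j.+1 (ltac:(lia)).
have HO := @stepO m j IHm IHE IHO.
split=> //; exact: (@stepE m j IHm IHE HO).
Qed.

Theorem lemma4p2 (g j : nat) :
  odd g -> (j <= (g.-1)./2)%N ->
  exists c : rat, 0 < c /\
    congr_mod_J g
      (beta_minus ^+ (j + (g.-1)./2) * beta_plus ^+ (g.-1) * zeta (g - 2 * j - 1))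
      ((ratr c : algC) *: gamma ^+ (g.-1)).
Proof.
move=> hg.
have [h eg] : exists h, g = (2 * h).+1.
  exists g./2; rewrite -{1}(odd_double_half g) hg mul2n; by rewrite add1n.
subst g => /=.
have eh : ((2 * h)./2 = h)%N by rewrite mul2n doubleK.
rewrite eh => hj.
have [c [hc sc]] := (main (2 * h) (h - j)).1 (ltac:(lia)).
have cpos : 0 < c by apply: sc; rewrite /= oddM.
exists (16%:R ^+ (h - j) * c); split.
  by apply: mulr_gt0 => //; apply: exprn_gt0; rewrite ltr0n.
rewrite /congr_mod_J -mul_mpolyC.
change ((ratr (16%:R ^+ (h - j) * c))%:MP) with (K (16%:R ^+ (h - j) * c)).
have -> : beta_minus ^+ (j + h) * beta_plus ^+ (2 * h) * zeta ((2 * h).+1 - 2 * j - 1)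
   - K (16%:R ^+ (h - j) * c) * gamma ^+ (2 * h)
   = beta_plus ^+ (h - j) * (XE (2 * h).+1 (h - j) - K c * gamma ^+ (2 * h).+1.-1)
     + K c * (beta_plus ^+ (h - j) * gamma ^+ (2 * h) - 16%:R ^+ (h - j) * gamma ^+ (2 * h)).
  rewrite /XE KM KX Kn /=.
  have -> : ((2 * h).+1 - 1 - (h - j) = j + h)%N by lia.
  have -> : ((2 * h).+1 - 2 * j - 1 = 2 * (h - j))%N by lia.
  have -> : beta_plus ^+ (2 * h) = beta_plus ^+ (h - j) * beta_plus ^+ (j + h).
    by rewrite -exprD; congr (_ ^+ _); lia.
  rewrite /delta exprMn.
  move: (beta_minus ^+ (j + h)) (beta_plus ^+ (j + h)) (beta_plus ^+ (h - j)) => A B C.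
  ring.
apply: inJD; apply: inJM => //; exact: topP.
Qed.
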